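(* Let $d\ge1$, $0<\mu\le L$, let $A\in\mathbb{R}^{d\times d}$ be symmetric with $\mu I\preceq A\preceq LI$, $b\in\mathbb{R}^d$, $f(x)=\frac12x^\top Ax+b^\top x$, and let $\{x_t\},\{G_t\}$ be generated by Sharpened-BFGS for quadratics from an arbitrary $x_0$, assuming $\nabla f(x_t)\neq0$ for all $t$ considered. Then for all $t\ge1$, $$\lambda_t\le\left(1-\frac{\mu}{dL}\right)^{\frac{t(t-1)}{4}}\left(\frac{dL}{t\mu}\right)^{\frac t2}\lambda_0,$$ where $\lambda_t:=\lambda_f(x_t)$.
   Context: For symmetric positive definite $A,G\in\mathbb{R}^{d\times d}$ and $u\in\mathbb{R}^d\setminus\{0\}$, the BFGS operator is $\mathrm{BFGS}(A,G,u):=G-\frac{Guu^\top G}{u^\top Gu}+\frac{Auu^\top A}{u^\top Au}$. The greedy vector is $\bar u(A,G):=\arg\max_{u\in\{e_1,\dots,e_d\}}\frac{u^\top Gu}{u^\top Au}$ (ties broken arbitrarily). The Newton decrement is $\lambda_f(x):=\sqrt{\nabla f(x)^\top\nabla^2 f(x)^{-1}\nabla f(x)}$. Sharpened-BFGS for quadratics: set $G_0=LI$; for $t=0,1,2,\dots$: $x_{t+1}=x_t-G_t^{-1}\nabla f(x_t)$, $s_t=x_{t+1}-x_t$, $\bar G_t=\mathrm{BFGS}(A,G_t,s_t)$, $\bar u=\bar u(A,\bar G_t)$, $G_{t+1}=\mathrm{BFGS}(A,\bar G_t,\bar u)$. *)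

(* Defs.v *)
From HB Require Import structures.
From mathcomp Require Import all_boot all_order all_algebra.
From mathcomp Require Import reals exp.
Set Implicit Arguments. Unset Strict Implicit. Unset Printing Implicit Defensive.
Import Order.TTheory GRing.Theory Num.Theory.
Local Open Scope ring_scope.

Section Defs.
Variable R : realType.

Definition qf (d : nat) (M : 'M[R]_d) (u v : 'cV[R]_d) : R := (u^T *m M *m v) 0 0.

Definition BFGS (d : nat) (A G : 'M[R]_d) (u : 'cV[R]_d) : 'M[R]_d :=
  G - (qf G u u)^-1 *: (G *m u *m u^T *m G) + (qf A u u)^-1 *: (A *m u *m u^T *m A).

Definition e_ (d : nat) (i : 'I_d) : 'cV[R]_d := delta_mx i 0.

Definition greedy_index (d : nat) (A G : 'M[R]_d) (i : 'I_d) : Prop :=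
  forall j : 'I_d, qf G (e_ j) (e_ j) / qf A (e_ j) (e_ j)
                   <= qf G (e_ i) (e_ i) / qf A (e_ i) (e_ i).

(* gradient of f(x) = 1/2 x^T A x + b^T x (A symmetric) *)
Definition grad_quad (d : nat) (A : 'M[R]_d) (b x : 'cV[R]_d) : 'cV[R]_d :=
  A *m x + b.

(* Newton decrement of f at x; the Hessian of f is A *)
Definition newton_decr (d : nat) (A : 'M[R]_d) (b x : 'cV[R]_d) : R :=
  Num.sqrt (qf (invmx A) (grad_quad A b x) (grad_quad A b x)).

Definition sharpened_bfgs_quad (d : nat) (L : R) (A : 'M[R]_d) (b : 'cV[R]_d)
  (x : nat -> 'cV[R]_d) (G : nat -> 'M[R]_d) : Prop :=
  G 0%N = L%:M /\
  forall t : nat,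
    x t.+1 = x t - invmx (G t) *m grad_quad A b (x t) /\
    let s := x t.+1 - x t in
    let Gbar := BFGS A (G t) s in
    exists i : 'I_d, greedy_index A Gbar i /\ G t.+1 = BFGS A Gbar (e_ i).

End Defs.

(* Main.v *)
Require Import Defs.
From HB Require Import structures.
From mathcomp Require Import all_boot all_order all_algebra.
From mathcomp Require Import reals exp.
From mathcomp Require Import ring lra zify.
Import Order.TTheory GRing.Theory Num.Theory.
Local Open Scope ring_scope.
Set Implicit Arguments. Unset Strict Implicit. Unset Printing Implicit Defensive.

Section QF.
Variable R : realType.
Variable d : nat.
Local Notation ee := (@e_ R d).
Implicit Types (M N : 'M[R]_d) (u v w : 'cV[R]_d).

Lemma qfDl M u1 u2 v : qf M (u1 + u2) v = qf M u1 v + qf M u2 v.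
Proof. by rewrite /qf linearD /= !mulmxDl mxE. Qed.
Lemma qfDr M u v1 v2 : qf M u (v1 + v2) = qf M u v1 + qf M u v2.
Proof. by rewrite /qf mulmxDr mxE. Qed.
Lemma qfZl M a u v : qf M (a *: u) v = a * qf M u v.
Proof. by rewrite /qf linearZ /= -!scalemxAl mxE. Qed.
Lemma qfZr M a u v : qf M u (a *: v) = a * qf M u v.
Proof. by rewrite /qf -scalemxAr mxE. Qed.
Lemma qfNl M u v : qf M (- u) v = - qf M u v.
Proof. by rewrite -scaleN1r qfZl mulN1r. Qed.
Lemma qfNr M u v : qf M u (- v) = - qf M u v.
Proof. by rewrite -scaleN1r qfZr mulN1r. Qed.
Lemma qfBl M u1 u2 v : qf M (u1 - u2) v = qf M u1 v - qf M u2 v.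
Proof. by rewrite qfDl qfNl. Qed.
Lemma qfBr M u v1 v2 : qf M u (v1 - v2) = qf M u v1 - qf M u v2.
Proof. by rewrite qfDr qfNr. Qed.
Lemma qfMD M N u v : qf (M + N) u v = qf M u v + qf N u v.
Proof. by rewrite /qf mulmxDr mulmxDl mxE. Qed.
Lemma qfMN M u v : qf (- M) u v = - qf M u v.
Proof. by rewrite /qf mulmxN mulNmx mxE. Qed.
Lemma qfMB M N u v : qf (M - N) u v = qf M u v - qf N u v.
Proof. by rewrite qfMD qfMN. Qed.
Lemma qfMZ M a u v : qf (a *: M) u v = a * qf M u v.
Proof. by rewrite /qf -scalemxAr -scalemxAl mxE. Qed.
Lemma qf_tr M u v : qf M^T v u = qf M u v.
Proof.
have tE (X : 'M[R]_1) : X 0 0 = X^T 0 0 by rewrite mxE.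
by rewrite /qf [RHS]tE !trmx_mul !trmxK mulmxA.
Qed.
Lemma qf_sym M u v : M^T = M -> qf M u v = qf M v u.
Proof. by move=> MT; rewrite -qf_tr MT. Qed.
Lemma qf_mulr M N u v : qf (M *m N) u v = qf M u (N *m v).
Proof. by rewrite /qf !mulmxA. Qed.
Lemma qf_mull M N u v : qf (M *m N) u v = qf N (M^T *m u) v.
Proof. by rewrite /qf trmx_mul trmxK !mulmxA. Qed.


Definition psd M := forall v, 0 <= qf M v v.

Lemma qf_expand M u v t : M^T = M ->
  qf M (u + t *: v) (u + t *: v) = qf M u u + 2 * t * qf M u v + t ^+ 2 * qf M v v.
Proof.
move=> MT; rewrite !qfDl !qfDr !qfZl !qfZr (qf_sym u v MT); ring.
Qed.

Lemma qf_cs M u v : M^T = M -> psd M -> qf M u v ^+ 2 <= qf M u u * qf M v v.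
Proof.
move=> MT Mp.
have H t : 0 <= qf M u u + 2 * t * qf M u v + t ^+ 2 * qf M v v.
  by rewrite -qf_expand.
move: H; set a := qf M u u; set b := qf M u v; set c := qf M v v => H.
have c0 : 0 <= c by apply: Mp.
have a0 : 0 <= a by apply: Mp.
have [cgt|] := ltrP 0 c.
  have := H (- b / c).
  have -> : a + 2 * (- b / c) * b + (- b / c) ^+ 2 * c = a - b ^+ 2 / c.
    by field; rewrite gt_eqF.
  rewrite subr_ge0 ler_pdivrMr // => h; by rewrite mulrC.
move=> cle; have c00 : c = 0 by apply/eqP; rewrite eq_le cle c0.
have [b0|bn0] := eqVneq b 0; first by rewrite b0 expr0n /= mulr_ge0.
have := H (- (a + 1) / (2 * b)).
have -> : a + 2 * (- (a + 1) / (2 * b)) * b + (- (a + 1) / (2 * b)) ^+ 2 * c = -1.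
  by rewrite c00; field; rewrite bn0.
by rewrite lerNr oppr0 ler10.
Qed.

Lemma dotC (u v : 'cV[R]_d) : (u^T *m v) 0 0 = (v^T *m u) 0 0.
Proof.
have tE (X : 'M[R]_1) : X 0 0 = X^T 0 0 by rewrite mxE.
by rewrite tE trmx_mul trmxK.
Qed.

Lemma qf_rank1 (w v : 'cV[R]_d) : qf (w *m w^T) v v = (w^T *m v) 0 0 ^+ 2.
Proof.
rewrite /qf !mulmxA -mulmxA [in LHS]mxE big_ord1 dotC expr2 //.
Qed.

Lemma qf_e M i j : qf M (ee i) (ee j) = M i j.
Proof. by rewrite /qf /e_ trmx_delta -rowE -colE !mxE. Qed.

Lemma tr_qf D w : \tr (w *m w^T *m D) = qf D w w.
Proof.
by rewrite -mulmxA mxtrace_mulC /mxtrace big_ord1 /qf.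
Qed.

Lemma psd_offdiag P i j : P^T = P -> psd P -> P i i = 0 -> P i j = 0.
Proof.
move=> PT Pp Pii.
have := qf_cs (ee i) (ee j) PT Pp; rewrite !qf_e Pii mul0r.
by move=> h; apply/eqP; rewrite -sqrf_eq0 eq_le h sqr_ge0.
Qed.

Lemma tr_psd_ge0 P D : P^T = P -> psd P -> psd D -> 0 <= \tr (P *m D).
Proof.
move=> + + Dp.
move: {2}#|[set j | P j j != 0]| (leqnn #|[set j | P j j != 0]|) => k.
elim: k P => [|k IH] P.
  rewrite leqn0 cards_eq0 => /eqP h PT Pp.
  have P0 : P = 0.
    apply/matrixP => i j; rewrite mxE; apply: psd_offdiag => //.
    by apply/eqP; apply: contraT => hi; have := in_set0 i; rewrite -h inE hi.
  by rewrite P0 mul0mx mxtrace0.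
move=> hk PT Pp.
have [h|[i]] := set_0Vmem [set j | P j j != 0].
  have P0 : P = 0.
    apply/matrixP => i j; rewrite mxE; apply: psd_offdiag => //.
    by apply/eqP; apply: contraT => hi; have := in_set0 i; rewrite -h inE hi.
  by rewrite P0 mul0mx mxtrace0.
rewrite inE => Pi0.
have Pi : 0 < P i i by rewrite lt0r Pi0 -qf_e Pp.
set w := P *m ee i.
set S := P - (P i i)^-1 *: (w *m w^T).
have eP : P = S + (P i i)^-1 *: (w *m w^T) by rewrite /S subrK.
have qfw v : qf P (ee i) v = (w^T *m v) 0 0.
  by rewrite /qf /w trmx_mul PT.
have ST : S^T = S by rewrite /S linearB /= linearZ /= trmx_mul trmxK PT.
have qfS v : qf S v v = qf P v v - (P i i)^-1 * (qf P (ee i) v) ^+ 2.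
  rewrite /S qfMB qfMZ qfw; congr (_ - _ * _).
  by rewrite qf_rank1.
have Sp : psd S.
  move=> v; rewrite qfS subr_ge0 -(ler_pM2l Pi) mulrA mulfV ?gt_eqF // mul1r.
  by rewrite -[X in X * _](qf_e P i i); apply: qf_cs.
have Sjj j : S j j = P j j - (P i i)^-1 * (P i j) ^+ 2.
  by rewrite -[LHS]qf_e qfS !qf_e.
rewrite eP mulmxDl mxtraceD; apply: addr_ge0.
  apply: IH => //.
  have sub : [set j | S j j != 0] \subset [set j | P j j != 0] :\ i.
    apply/subsetP => j; rewrite !inE => Sj; apply/andP; split.
      by apply: contra Sj => /eqP ->; rewrite Sjj expr2 mulrA mulVf // mul1r subrr.
    apply: contra Sj => /eqP Pj; rewrite Sjj -[P i j]qf_e (qf_sym _ _ PT) qf_e.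
    by rewrite (psd_offdiag (i:=j) i PT Pp Pj) Pj expr0n /= mulr0 subrr.
  rewrite -ltnS; apply: leq_trans hk; apply: leq_ltn_trans (subset_leq_card sub) _.
  by rewrite [X in (_ < X)%N](cardsD1 i) inE Pi0.
rewrite -scalemxAl mxtraceZ tr_qf mulr_ge0 //.
by rewrite invr_ge0 ltW.
Qed.

End QF.

Section Num.
Variable R : realType.

Lemma final_num (q c0 : R) (t : nat) (D : nat -> R) :
  0 < q -> (0 < t)%N -> (forall i, 0 <= D i) -> \sum_(i < t) D i / q ^+ i <= c0 ->
  \prod_(i < t) D i <= q ^+ (\sum_(i < t) (i : nat)) * (c0 / t%:R) ^+ t.
Proof.
move=> q0 t0 D0 hs.
pose w (i : 'I_t) := D i / q ^+ i.
have w0 i : 0 <= w i by apply: divr_ge0 => //; apply: exprn_ge0; exact: ltW.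
have -> : \prod_(i < t) D i = \prod_(i < t) (q ^+ i * w i).
  apply: eq_bigr => i _; rewrite /w mulrC divfK //; apply: expf_neq0; by rewrite gt_eqF.
rewrite big_split /= prodrXr; apply: ler_wpM2l; first by apply: exprn_ge0; exact: ltW.
have [h _] := leif_AGM (A := predT) (E := w) (fun i _ => w0 i).
move: h; rewrite cardT size_enum_ord => h; apply: le_trans h _.
have s0 : 0 <= \sum_(i in predT) w i by apply: sumr_ge0 => i _.
have c00 : 0 <= c0 by apply: le_trans hs.
apply: lerXn2r; rewrite ?nnegrE; try (apply: divr_ge0 => //; exact: ler0n).
by rewrite ler_pM2r ?invr_gt0 ?ltr0n.
Qed.

Lemma sum_nat2 t : ((\sum_(i < t) (i : nat)) * 2 = t * (t - 1))%N.
Proof.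
elim: t => [|t IH]; first by rewrite big_ord0.
rewrite big_ord_recr /= mulnDl IH; case: t {IH} => [|t] //; rewrite !subSS !subn0; nia.
Qed.
End Num.

Section Main.
Variable R : realType.
Variable d : nat.
Local Notation ee := (@e_ R d).
Implicit Types (M N G : 'M[R]_d) (u v w : 'cV[R]_d).
Variables (mu L : R) (A : 'M[R]_d).
Hypothesis mu0 : 0 < mu.
Hypothesis muL : mu <= L.
Hypothesis AT : A^T = A.
Hypothesis HA : forall v : 'cV[R]_d, mu * qf 1%:M v v <= qf A v v /\ qf A v v <= L * qf 1%:M v v.

Lemma nrm_ge0 v : 0 <= qf 1%:M v v.
Proof.
rewrite /qf mulmx1 mxE; apply: sumr_ge0 => j _; rewrite mxE -expr2; exact: sqr_ge0.
Qed.

Lemma nrm_gt0 v : v != 0 -> 0 < qf 1%:M v v.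
Proof.
move=> vn0; rewrite lt0r nrm_ge0 andbT; apply: contra vn0.
rewrite /qf mulmx1 mxE psumr_eq0 => [/allP h|j _]; last first.
  by rewrite mxE -expr2 sqr_ge0.
apply/eqP/matrixP => j k; rewrite ord1 !mxE.
have := h j (mem_index_enum _); rewrite mxE -expr2 sqrf_eq0 => /eqP //.
Qed.

Lemma qfA_gt0 v : v != 0 -> 0 < qf A v v.
Proof.
move=> vn0; apply: lt_le_trans (proj1 (HA v)); exact: mulr_gt0 (nrm_gt0 vn0).
Qed.

Lemma A_unit : A \in unitmx.
Proof.
rewrite unitmxE unitfE; apply/negP => /det0P [r rn0 rA].
have : r^T != 0 by apply: contra rn0 => /eqP h; rewrite -[r]trmxK h linear0.
move/qfA_gt0; rewrite /qf trmxK rA mul0mx mxE.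
by rewrite ltxx.
Qed.

Definition Ai := invmx A.
Lemma AAi : A *m Ai = 1%:M. Proof. exact: mulmxV A_unit. Qed.
Lemma AiA : Ai *m A = 1%:M. Proof. exact: mulVmx A_unit. Qed.
Lemma AiT : Ai^T = Ai. Proof. by rewrite /Ai trmx_inv AT. Qed.

Lemma qf_Ai_A v : qf Ai (A *m v) (A *m v) = qf A v v.
Proof. by rewrite /qf trmx_mul AT !mulmxA -(mulmxA _ Ai A) AiA mulmx1. Qed.

Lemma Ai_psd : psd Ai.
Proof.
move=> v; rewrite -[v]mul1mx -AAi -mulmxA qf_Ai_A.
case: (eqVneq (Ai *m v) 0) => [->|h]; first by rewrite /qf mulmx0 mxE.
exact: ltW (qfA_gt0 h).
Qed.

Lemma BFGS_sym G u : G^T = G -> (BFGS A G u)^T = BFGS A G u.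
Proof.
move=> GT; rewrite /BFGS !linearD /= !linearN /= !linearZ /=.
by rewrite !trmx_mul !trmxK GT AT !mulmxA.
Qed.

Lemma rank1E G u : G^T = G -> G *m u *m u^T *m G = (G *m u) *m (G *m u)^T.
Proof. by move=> GT; rewrite trmx_mul GT !mulmxA. Qed.

Lemma qf_bfgs G u v : G^T = G -> qf (BFGS A G u) v v =
  qf G v v - (qf G u v) ^+ 2 / qf G u u + (qf A u v) ^+ 2 / qf A u u.
Proof.
move=> GT; rewrite /BFGS qfMD qfMB !qfMZ (rank1E _ GT) (rank1E _ AT) !qf_rank1.
have h M : M^T = M -> ((M *m u)^T *m v) 0 0 = qf M u v by move=> MT; rewrite /qf trmx_mul MT.
by rewrite !h // [_ * _ ^+ 2]mulrC [(qf A u u)^-1 * _]mulrC.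
Qed.

Lemma key_ineq (a dl p al be : R) : 0 < a -> 0 <= dl -> 0 <= p ->
  be ^+ 2 <= dl * p -> 0 <= p - (al + be) ^+ 2 / (a + dl) + al ^+ 2 / a.
Proof.
move=> a0 dl0 p0 cs.
have ad : 0 < a + dl by apply: ltr_wpDr.
have -> : p - (al + be) ^+ 2 / (a + dl) + al ^+ 2 / a =
  (a * (dl * p - be ^+ 2) + (a ^+ 2 * p - 2 * a * al * be + al ^+ 2 * dl)) / (a * (a + dl)).
  by field; rewrite !gt_eqF.
apply: divr_ge0; last by apply: ltW; apply: mulr_gt0.
apply: addr_ge0; first by apply: mulr_ge0; [exact: ltW | rewrite subr_ge0].
have [p00|pp] := eqVneq p 0.
  have be0 : be = 0 by apply/eqP; rewrite -sqrf_eq0 eq_le sqr_ge0 andbT; move: cs; rewrite p00 mulr0.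
  rewrite p00 be0 !mulr0 subr0 add0r.
  by apply: mulr_ge0 => //; exact: sqr_ge0.
have pgt : 0 < p by rewrite lt0r pp.
rewrite -(pmulr_rge0 _ pgt).
have -> : p * (a ^+ 2 * p - 2 * a * al * be + al ^+ 2 * dl) =
   (a * p - al * be) ^+ 2 + al ^+ 2 * (dl * p - be ^+ 2) by ring.
by apply: addr_ge0; [exact: sqr_ge0 | apply: mulr_ge0; [exact: sqr_ge0 | rewrite subr_ge0]].
Qed.

Definition Inv G := G^T = G /\ forall v, qf A v v <= qf G v v.

Lemma Inv_psd G : Inv G -> psd (G - A).
Proof. by move=> [_ h] v; rewrite qfMB subr_ge0. Qed.

Lemma Inv_sym G : Inv G -> (G - A)^T = G - A.
Proof. by move=> [GT _]; rewrite linearB /= GT AT. Qed.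

Lemma Inv_BFGS G u : Inv G -> u != 0 -> Inv (BFGS A G u).
Proof.
move=> IG un0; split; first exact: BFGS_sym IG.1.
move=> v; rewrite (qf_bfgs _ _ IG.1).
have eG x y : qf G x y = qf A x y + qf (G - A) x y by rewrite qfMB addrC subrK.
rewrite !eG.
have := key_ineq (qf A u v) (qfA_gt0 un0) (Inv_psd IG u) (Inv_psd IG v)
   (qf_cs u v (Inv_sym IG) (Inv_psd IG)).
lra.
Qed.

Definition sig G := \tr (Ai *m G) - d%:R.

Lemma sigE G : sig G = \tr (Ai *m (G - A)).
Proof. by rewrite /sig mulmxBr linearB /= AiA mxtrace1. Qed.

Lemma qf_Ai_AG G u : G^T = G -> qf Ai (A *m u) (G *m u) = qf G u u.
Proof. by move=> GT; rewrite /qf trmx_mul AT !mulmxA -(mulmxA _ A Ai) AAi mulmx1. Qed.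

Lemma trBFGS G u : G^T = G -> u != 0 -> qf G u u != 0 ->
  \tr (Ai *m BFGS A G u) = \tr (Ai *m G) - qf Ai (G *m u) (G *m u) / qf G u u + 1.
Proof.
move=> GT un0 gn0; rewrite /BFGS (rank1E _ GT) (rank1E _ AT).
rewrite mulmxDr mulmxBr mxtraceD linearB /= -!scalemxAr !mxtraceZ.
rewrite ![\tr (Ai *m _)]mxtrace_mulC !tr_qf qf_Ai_A mulVf ?gt_eqF ?qfA_gt0 //.
by rewrite [_^-1 * _]mulrC.
Qed.

Lemma Inv_gt0 G u : Inv G -> u != 0 -> 0 < qf G u u.
Proof. by move=> [_ h] un0; apply: lt_le_trans (h u); apply: qfA_gt0. Qed.

Lemma drop G u : Inv G -> u != 0 ->
  sig G - sig (BFGS A G u) = qf Ai (G *m u) (G *m u) / qf G u u - 1.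
Proof.
move=> IG un0; rewrite /sig (trBFGS IG.1 un0) ?gt_eqF ?(Inv_gt0 IG un0) //.
lra.
Qed.

Lemma drop_ge G u : Inv G -> u != 0 ->
  qf G u u / qf A u u - 1 <= sig G - sig (BFGS A G u).
Proof.
move=> IG un0; rewrite drop // lerD2r.
have g0 := Inv_gt0 IG un0; have a0 := qfA_gt0 un0.
have := qf_cs (A *m u) (G *m u) AiT Ai_psd.
rewrite qf_Ai_AG; last by case: IG.
rewrite qf_Ai_A => h.
rewrite ler_pdivrMr // mulrAC ler_pdivlMr //.
by rewrite -expr2 mulrC.
Qed.

Lemma drop_ge0 G u : Inv G -> u != 0 -> 0 <= sig G - sig (BFGS A G u).
Proof.
move=> IG un0; apply: le_trans (drop_ge IG un0).
rewrite subr_ge0 ler_pdivlMr ?qfA_gt0 // mul1r; by case: IG.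
Qed.

Lemma sig_ge0 G : Inv G -> 0 <= sig G.
Proof.
move=> IG; rewrite sigE; apply: tr_psd_ge0; [exact: AiT | exact: Ai_psd | exact: Inv_psd].
Qed.

Lemma Ai_le v : qf Ai v v <= mu^-1 * qf 1%:M v v.
Proof.
set w := Ai *m v.
have vE : v = A *m w by rewrite /w mulmxA AAi mul1mx.
have ea : qf Ai v v = qf A w w by rewrite vE qf_Ai_A.
have cs := qf_cs w (A *m w) (trmx1 _ _) nrm_ge0.
rewrite -qf_mulr mul1mx -vE in cs.
have n0 := nrm_ge0 w; have N0 := nrm_ge0 v.
have hmu := (HA w).1.
have a0 : 0 <= qf A w w by rewrite -ea; apply: Ai_psd.
rewrite ea ler_pdivlMl //.
move: cs hmu a0 n0 N0; set a := qf A w w; set n := qf 1%:M w w; set N := qf 1%:M v v.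
move=> cs hmu a0 n0 N0.
have [a00|ap] := eqVneq a 0; first by rewrite a00 mulr0.
have agt : 0 < a by rewrite lt0r ap.
rewrite -(ler_pM2r agt); apply: le_trans (_ : n * N * mu <= _).
  by rewrite -[mu * a * a]mulrA -expr2 mulrC; apply: ler_wpM2r => //; exact: ltW.
by rewrite mulrAC [N * a]mulrC [n * mu]mulrC; apply: ler_wpM2r.
Qed.

Lemma sig_le G : Inv G -> sig G <= mu^-1 * \tr (G - A).
Proof.
move=> IG; set P := mu^-1%:M - Ai.
have PT : P^T = P by rewrite /P linearB /= tr_scalar_mx AiT.
have Pp : psd P.
  move=> v; rewrite /P qfMB -scalemx1 qfMZ subr_ge0; exact: Ai_le.
have := tr_psd_ge0 PT Pp (Inv_psd IG).
rewrite /P mulmxBl linearB /= mul_scalar_mx mxtraceZ subr_ge0 -sigE //.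
Qed.

Lemma ee_neq0 j : ee j != 0.
Proof.
apply/eqP => h; have := congr1 (fun M : 'cV[R]_d => M j 0) h.
by rewrite /e_ !mxE !eqxx /= => /eqP; rewrite oner_eq0.
Qed.

Lemma nrm_ee j : qf 1%:M (ee j) (ee j) = 1.
Proof. by rewrite qf_e mxE eqxx. Qed.

Lemma greedy_step Gb i : (0 < d)%N -> Inv Gb -> greedy_index A Gb i ->
  sig (BFGS A Gb (ee i)) <= (1 - mu / (d%:R * L)) * sig Gb.
Proof.
move=> d0 IG gi.
have L0 : 0 < L by apply: lt_le_trans muL.
have d0' : 0 < d%:R :> R by rewrite ltr0n.
set m := qf Gb (ee i) (ee i) / qf A (ee i) (ee i) - 1.
have hdrop := drop_ge IG (ee_neq0 i); rewrite -/m in hdrop.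
have m0 : 0 <= m.
  rewrite /m subr_ge0 ler_pdivlMr ?qfA_gt0 ?ee_neq0 // mul1r; exact: IG.2.
have Ajj j : 0 < A j j /\ A j j <= L.
  split; first by rewrite -qf_e qfA_gt0 // ee_neq0.
  by have := (HA (ee j)).2; rewrite nrm_ee mulr1 qf_e.
have Djj j : (Gb - A) j j <= m * L.
  have := gi j; rewrite !qf_e -/(qf _ _ _) => h.
  have {}h : Gb j j / A j j <= m + 1.
    by apply: (le_trans h); rewrite /m subrK !qf_e.
  have [a0 aL] := Ajj j.
  rewrite ler_pdivrMr // in h.
  rewrite !mxE; apply: le_trans (_ : m * A j j <= _); first lra.
  by apply: ler_wpM2l.
have trD : \tr (Gb - A) <= d%:R * (m * L).
  rewrite /mxtrace; apply: le_trans (_ : \sum_(j < d) (m * L) <= _).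
    by apply: ler_sum => j _; apply: Djj.
  by rewrite sumr_const card_ord mulr_natl.
have sg := sig_le IG.
have key : mu / (d%:R * L) * sig Gb <= m.
  have s1 : sig Gb <= mu^-1 * (d%:R * (m * L)).
    apply: le_trans sg _; apply: ler_wpM2l trD; rewrite invr_ge0; exact: ltW.
  have c0 : 0 <= mu / (d%:R * L).
    by apply: divr_ge0; [exact: ltW | apply: ltW; apply: mulr_gt0].
  apply: le_trans (ler_wpM2l c0 s1) _.
  have -> : mu / (d%:R * L) * (mu^-1 * (d%:R * (m * L))) = m.
    by field; rewrite !gt_eqF.
  by [].
have -> : sig (BFGS A Gb (ee i)) = sig Gb - (sig Gb - sig (BFGS A Gb (ee i))) by rewrite opprB addrC subrK.
lra.
Qed.

Lemma pd_unit M : (forall v, v != 0 -> 0 < qf M v v) -> M \in unitmx.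
Proof.
move=> pd; rewrite unitmxE unitfE; apply/negP => /det0P [r rn0 rA].
have : r^T != 0 by apply: contra rn0 => /eqP h; rewrite -[r]trmxK h linear0.
by move/pd; rewrite /qf trmxK rA mul0mx mxE ltxx.
Qed.

Lemma Inv_unit G : Inv G -> G \in unitmx.
Proof. by move=> IG; apply: pd_unit => v; apply: Inv_gt0. Qed.

Lemma Inv_L : Inv (L%:M).
Proof.
split; first by rewrite tr_scalar_mx.
by move=> v; rewrite -scalemx1 qfMZ; exact: (HA v).2.
Qed.

Lemma sig0 : sig (L%:M) <= d%:R * L / mu - d%:R.
Proof.
rewrite /sig lerD2r mul_mx_scalar mxtraceZ.
have L0 : 0 <= L by apply: ltW; apply: lt_le_trans muL.
apply: le_trans (_ : L * (d%:R * mu^-1) <= _); last by rewrite mulrCA mulrA.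
apply: ler_wpM2l => //; rewrite /mxtrace.
apply: le_trans (_ : \sum_(j < d) mu^-1 <= _); last by rewrite sumr_const card_ord mulr_natl.
apply: ler_sum => j _; rewrite -qf_e; apply: le_trans (Ai_le _) _.
by rewrite nrm_ee mulr1.
Qed.

Definition Lam v := qf Ai v v.

Lemma Lam_gt0 v : v != 0 -> 0 < Lam v.
Proof.
move=> vn0; rewrite /Lam -[v]mul1mx -AAi -mulmxA qf_Ai_A; apply: qfA_gt0.
by apply: contra vn0 => /eqP h; rewrite -[v]mul1mx -AAi -mulmxA h mulmx0.
Qed.

Lemma Lam_ge0 v : 0 <= Lam v.
Proof. exact: Ai_psd. Qed.

Lemma step_num (a g h : R) : 0 < a -> a <= g -> a - 2 * g + h <= h * (h / g - 1).
Proof.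
move=> a0 ag; have g0 : 0 < g by apply: lt_le_trans ag.
rewrite -subr_ge0.
have -> : h * (h / g - 1) - (a - 2 * g + h) = ((h - g) ^+ 2 + g * (g - a)) / g.
  by field; rewrite gt_eqF.
apply: divr_ge0; last exact: ltW.
apply: addr_ge0; first exact: sqr_ge0.
by apply: mulr_ge0; [exact: ltW | rewrite subr_ge0].
Qed.

Lemma s_step G g : Inv G -> g != 0 ->
  let s := - (invmx G *m g) in
  s != 0 /\ Lam (g + A *m s) <= Lam g * (sig G - sig (BFGS A G s)).
Proof.
move=> IG gn0 s.
have Gu := Inv_unit IG.
have gE : g = - (G *m s) by rewrite /s mulmxN mulmxA mulmxV // mul1mx opprK.
have sn0 : s != 0 by apply: contra gn0 => /eqP h; rewrite gE h mulmx0 oppr0.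
split => //.
rewrite (drop IG sn0).
have -> : g + A *m s = (A - G) *m s by rewrite gE mulmxBl addrC.
have -> : Lam g = qf Ai (G *m s) (G *m s) by rewrite /Lam gE qfNl qfNr opprK.
rewrite /Lam mulmxBl qfBl !qfBr qf_Ai_A (qf_Ai_AG _ IG.1) (qf_sym _ _ AiT) (qf_Ai_AG _ IG.1).
have := step_num (qf Ai (G *m s) (G *m s)) (qfA_gt0 sn0) (IG.2 s).
lra.
Qed.

Lemma main_bound (b : 'cV[R]_d) (x : nat -> 'cV[R]_d) (G : nat -> 'M[R]_d) :
  (1 <= d)%N -> sharpened_bfgs_quad L A b x G ->
  (forall t : nat, grad_quad A b (x t) != 0) ->
  forall t : nat, (1 <= t)%N ->
    newton_decr A b (x t) <=
      (1 - mu / (d%:R * L)) `^ ((t * (t - 1))%:R / 4)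
      * (d%:R * L / (t%:R * mu)) `^ (t%:R / 2)
      * newton_decr A b (x 0%N).
Proof.
move=> d1 [G0 Hit] Hg.
have L0 : 0 < L by apply: lt_le_trans muL.
have dR : 0 < d%:R :> R by rewrite ltr0n.
pose g t := grad_quad A b (x t).
pose Gb t := BFGS A (G t) (x t.+1 - x t).
have sE t : x t.+1 - x t = - (invmx (G t) *m g t).
  by rewrite (Hit t).1 addrC addKr.
have gE t : g t.+1 = g t + A *m (x t.+1 - x t).
  by rewrite /g /grad_quad mulmxBr addrAC [A *m x t + _]addrC subrK.
have IG : forall t, Inv (G t).
  elim=> [|t IH]; first by rewrite G0; exact: Inv_L.
  have [sn0 _] := s_step IH (Hg t).
  have [i [gi ->]] := (Hit t).2.
  by apply: Inv_BFGS (ee_neq0 i); apply: Inv_BFGS; rewrite // sE.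
pose D t := sig (G t) - sig (Gb t).
have sn0 t : x t.+1 - x t != 0 by rewrite sE; exact: (s_step (IG t) (Hg t)).1.
have stepL t : Lam (g t.+1) <= Lam (g t) * D t.
  by rewrite gE /D /Gb sE; exact: (s_step (IG t) (Hg t)).2.
have D0 t : 0 <= D t by exact: drop_ge0 (IG t) (sn0 t).
set q := 1 - mu / (d%:R * L).
have sigstep t : sig (G t.+1) <= q * sig (Gb t).
  have [i [gi ->]] := (Hit t).2.
  apply: greedy_step gi => //; apply: Inv_BFGS; [exact: IG | exact: sn0].
have sG0 : sig (G 0%N) <= d%:R * L / mu - d%:R by rewrite G0; exact: sig0.
have q0 : 0 < q.
  have qge : 0 <= q.
    rewrite subr_ge0 ler_pdivrMr ?mulr_gt0 // mul1r.
    apply: le_trans muL _; rewrite -[X in X <= _]mul1r ler_wpM2r ?ler1n //; exact: ltW.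
  rewrite lt0r qge andbT; apply/negP => /eqP qe.
  have emu : mu = d%:R * L.
    move: qe; rewrite /q => /eqP; rewrite subr_eq0 => /eqP h.
    by rewrite -[mu](divfK (x := d%:R * L)) ?gt_eqF ?mulr_gt0 // -h mul1r.
  have : Lam (g 1%N) <= 0.
    apply: le_trans (stepL 0%N) _; apply: mulr_ge0_le0; first exact: Lam_ge0.
    apply: le_trans (_ : sig (G 0%N) <= 0).
      by rewrite /D lerBlDr lerDl; apply: sig_ge0; apply: Inv_BFGS; [exact: IG | exact: sn0].
    apply: le_trans sG0 _; rewrite emu mulfV ?gt_eqF ?mulr_gt0 // subr_le0 ler1n //.
  by rewrite leNgt (Lam_gt0 (Hg 1%N)).
have ind t : Lam (g t) <= Lam (g 0%N) * \prod_(i < t) D i /\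
    \sum_(i < t) D i / q ^+ i + sig (G t) / q ^+ t <= sig (G 0%N).
  elim: t => [|t [IH1 IH2]].
    by rewrite !big_ord0 mulr1 add0r expr0 divr1.
  split.
    rewrite big_ord_recr /= mulrA; apply: le_trans (stepL t) _.
    apply: ler_wpM2r => //.
  apply: le_trans IH2; rewrite big_ord_recr /= -addrA lerD2l.
  have qt : 0 < q ^+ t by apply: exprn_gt0.
  rewrite exprS.
  apply: le_trans (_ : D t / q ^+ t + q * sig (Gb t) / (q * q ^+ t) <= _).
    by rewrite lerD2l ler_pM2r ?invr_gt0 ?mulr_gt0.
  rewrite -mulf_div divff ?gt_eqF // mul1r -mulrDl /D subrK //.
move=> t t1.
have [hL hS] := ind t.
have Lam0 := Lam_ge0 (g 0%N).
set K := d%:R * L / (t%:R * mu).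
have tR : 0 < t%:R :> R by rewrite ltr0n.
have K0 : 0 < K by rewrite /K; apply: divr_gt0; apply: mulr_gt0.
have hsum : \sum_(i < t) D i / q ^+ i <= d%:R * L / mu.
  apply: le_trans (_ : sig (G 0%N) <= _); last by apply: le_trans sG0 _; rewrite lerBlDr lerDl.
  apply: le_trans hS; rewrite lerDl; apply: divr_ge0; first exact: sig_ge0.
  by apply: exprn_ge0; exact: ltW.
have hprod := final_num q0 t1 D0 hsum.
set C := (\sum_(i < t) (i : nat))%N in hprod.
have hC : (t * (t - 1))%N = (C * 2)%N by rewrite sum_nat2.
have eK : d%:R * L / mu / t%:R = K by rewrite /K; field; rewrite !gt_eqF.
rewrite eK in hprod.
have hq : (q `^ ((t * (t - 1))%:R / 4)) ^+ 2 = q ^+ C.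
  rewrite expr2 -powRD; last by rewrite (gt_eqF q0) implybT.
  rewrite hC natrM -powR_mulrn; last exact: ltW.
  by congr (_ `^ _); field.
have hK : (K `^ (t%:R / 2)) ^+ 2 = K ^+ t.
  rewrite expr2 -powRD; last by rewrite (gt_eqF K0) implybT.
  rewrite -powR_mulrn; last exact: ltW.
  by congr (_ `^ _); field.
set T := _ * _ * newton_decr A b (x 0%N).
have T0 : 0 <= T.
  by rewrite /T !mulr_ge0 ?powR_ge0 // sqrtr_ge0.
rewrite -(ger0_norm T0) -sqrtr_sqr ler_sqrt; last exact: sqr_ge0.
rewrite /T !exprMn hq hK sqr_sqrtr //.
apply: le_trans hL _; rewrite mulrC; apply: ler_wpM2r => //.
Qed.

End Main.

Unset Implicit Arguments.

Theorem theorem2 (R : realType) (d : nat) (mu L : R) (A : 'M[R]_d) (b : 'cV[R]_d)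
  (x : nat -> 'cV[R]_d) (G : nat -> 'M[R]_d) :
  (1 <= d)%N -> 0 < mu -> mu <= L ->
  A^T = A ->
  (forall v : 'cV[R]_d, mu * qf 1%:M v v <= qf A v v /\ qf A v v <= L * qf 1%:M v v) ->
  sharpened_bfgs_quad L A b x G ->
  (forall t : nat, grad_quad A b (x t) != 0) ->
  forall t : nat, (1 <= t)%N ->
    newton_decr A b (x t) <=
      (1 - mu / (d%:R * L)) `^ ((t * (t - 1))%:R / 4)
      * (d%:R * L / (t%:R * mu)) `^ (t%:R / 2)
      * newton_decr A b (x 0%N).
Proof.
move=> d1 mu0 muL AT HA Hs Hg t t1.
exact: (main_bound mu0 muL AT HA d1 Hs Hg t1).
Qed.
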